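(* Let $H$ be a Krull monoid with class group $G$, and let $\emptyset\ne S\subseteq\mathfrak X(H)$ be finite. The following are equivalent: (a) there exists an absolutely irreducible $a\in H$ with $\mathrm{supp}(aH)=S$; (b) $S$ is minimal (w.r.t. inclusion) in $\{\mathrm{supp}(bH): b\in H\setminus H^\times\}$; (c) $S$ is minimal in $\{\mathrm{supp}(bH): b\in H \text{ irreducible}\}$; (d) the family $([\mathfrak p])_{\mathfrak p\in S}$ in $G$ is $\mathbb Z_{\ge0}$-linearly dependent, and every proper subfamily is $\mathbb Z_{\ge0}$-linearly independent; (e) the family $([\mathfrak p])_{\mathfrak p\in S}$ in $G$ is $\mathbb Z_{\ge0}$-linearly dependent, and every proper subfamily is $\mathbb Z$-linearly independent. Moreover, if these conditions hold, the absolutely irreducible element with support $S$ is unique up to associates.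
   Context: $H$ is a cancellative commutative monoid with unit group $H^\times$; it is a Krull monoid if it is $v$-noetherian and completely integrally closed. $\mathfrak X(H)$ denotes the set of nonempty divisorial prime ideals of $H$; every nonempty divisorial ideal $\mathfrak a$ is uniquely a divisorial product $\big(\prod_{\mathfrak p\in\mathfrak X(H)}\mathfrak p^{\mathsf v_\mathfrak p(\mathfrak a)}\big)_v$, and its support is $\mathrm{supp}(\mathfrak a)=\{\mathfrak p\in\mathfrak X(H):\mathsf v_\mathfrak p(\mathfrak a)>0\}$. The class group $G$ is the group of divisorial fractional ideals modulo principal ones, $[\mathfrak a]$ denotes the class of $\mathfrak a$, and $G$ is written additively. A family $(g_\mathfrak p)_{\mathfrak p\in S}$ is $\mathbb Z_{\ge0}$-linearly dependent if $\sum\alpha_\mathfrak p g_\mathfrak p=0$ for some nonzero $(\alpha_\mathfrak p)\in\mathbb Z_{\ge0}^S$ (the empty family counts as independent). Irreducible: non-unit not a product of two non-units. An irreducible $r$ is absolutely irreducible if for every $n$, every factorization of $r^n$ into irreducibles coincides, up to order and associates, with $r\cdots r$. *)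

(* Defs.v *)
From HB Require Import structures.
From mathcomp Require Import all_boot all_order all_algebra.
From mathcomp Require Import boolp classical_sets functions cardinality fsbigop.

Set Implicit Arguments.
Unset Strict Implicit.
Unset Printing Implicit Defensive.
Import Order.TTheory GRing.Theory Num.Theory.

Local Open Scope classical_set_scope.
Local Open Scope ring_scope.

(* Convention.  A cancellative commutative monoid H is represented as a     *)
(* submonoid of its quotient group q(H).  The quotient group is an abelian   *)
(* group, given as a zmodType Q, hence WRITTEN ADDITIVELY: the monoid        *)
(* product "a b" of the paper is  a + b  here, the unit element is 0,        *)
(* a^n is  a *+ n,  and  x^{-1}  is  - x.  H : set Q is the carrier.         *)

Section KrullDefs.
Variable Q : zmodType.
Variable H : set Q.

Definition is_monoid_with_quotient_group : Prop :=
  [/\ H 0,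
      (forall a b, H a -> H b -> H (a + b)) &
      (forall x : Q, exists a b, [/\ H a, H b & x = a - b])].

Definition munit (a : Q) : Prop := H a /\ H (- a).

Definition massoc (a b : Q) : Prop := H a /\ H b /\ munit (a - b).

Definition mirreducible (r : Q) : Prop :=
  [/\ H r, ~ munit r &
      forall a b, H a -> H b -> r = a + b -> munit a \/ munit b].

Definition abs_irreducible (r : Q) : Prop :=
  mirreducible r /\
  forall (n : nat) (l : seq Q),
    (forall x, x \in l -> mirreducible x) ->
    \sum_(x <- l) x = r *+ n ->
    size l = n /\ (forall x, x \in l -> massoc x r).

Definition minv (X : set Q) : set Q := [set x | forall y, X y -> H (x + y)].

Definition vclose (X : set Q) : set Q := minv (minv X).

Definition sideal (a : set Q) : Prop :=
  a `<=` H /\ (forall x h, a x -> H h -> a (x + h)).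

Definition divisorial_ideal (a : set Q) : Prop := sideal a /\ vclose a = a.

Definition prime_sideal (p : set Q) : Prop :=
  [/\ sideal p, p <> H &
      forall a b, H a -> H b -> p (a + b) -> p a \/ p b].

Definition XH : set (set Q) :=
  [set p | [/\ p !=set0, prime_sideal p & divisorial_ideal p]].

Definition v_noetherian : Prop :=
  forall f : nat -> set Q,
    (forall n, divisorial_ideal (f n)) ->
    (forall n, f n `<=` f n.+1) ->
    exists m, forall n, (m <= n)%N -> f n = f m.

Definition completely_integrally_closed : Prop :=
  forall x c : Q, H c -> (forall n : nat, H (c + x *+ n)) -> H x.

Definition krull_monoid : Prop :=
  [/\ is_monoid_with_quotient_group, v_noetherian & completely_integrally_closed].

Definition principal (x : Q) : set Q := [set x + h | h in H].

Definition setmul (A B : set Q) : set Q := [set a + b | a in A & b in B].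
Definition vmul (A B : set Q) : set Q := vclose (setmul A B).

Fixpoint vpow (A : set Q) (n : nat) : set Q :=
  if n is n'.+1 then vmul A (vpow A n') else H.

Definition vpowz (A : set Q) (z : int) : set Q :=
  match z with
  | Posz n => vpow A n
  | Negz n => vpow (minv A) n.+1
  end.

Definition vprod (T : set (set Q)) (e : set Q -> nat) : set Q :=
  \big[vmul/H]_(p \in T) vpow p (e p).

Definition vprodz (T : set (set Q)) (e : set Q -> int) : set Q :=
  \big[vmul/H]_(p \in T) vpowz p (e p).

(* v_p(a) = n : the exponent of p in the (unique) representation
   a = (prod_{q in X(H)} q^{e q})_v *)
Definition vexp (a p : set Q) (n : nat) : Prop :=
  exists e : set Q -> nat,
    [/\ [set q | e q <> 0%N] `<=` XH,
        finite_set [set q | e q <> 0%N],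
        a = vprod [set q | e q <> 0%N] e &
        e p = n].

Definition supp (a : set Q) : set (set Q) :=
  [set p | XH p /\ exists n, (0 < n)%N /\ vexp a p n].

(* The class of a divisorial fractional ideal is 0 in the class group G
   iff the ideal is principal. *)
Definition class_zero (A : set Q) : Prop := exists x : Q, A = principal x.

Definition classes_N_dependent (T : set (set Q)) : Prop :=
  exists alpha : set Q -> nat,
    (exists p, T p /\ alpha p <> 0%N) /\ class_zero (vprod T alpha).

Definition classes_N_independent (T : set (set Q)) : Prop :=
  ~ classes_N_dependent T.

Definition classes_Z_independent (T : set (set Q)) : Prop :=
  forall alpha : set Q -> int,
    class_zero (vprodz T alpha) -> forall p, T p -> alpha p = 0.

Definition minimal_in (F : set (set (set Q))) (S : set (set Q)) : Prop :=
  F S /\ forall T, F T -> T `<=` S -> T = S.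

Definition supps_nonunits : set (set (set Q)) :=
  [set T | exists b, [/\ H b, ~ munit b & supp (principal b) = T]].

Definition supps_irreducibles : set (set (set Q)) :=
  [set T | exists b, mirreducible b /\ supp (principal b) = T].

End KrullDefs.

(* Main.v *)
Require Import Defs.
From HB Require Import structures.
From mathcomp Require Import all_boot all_order all_algebra.
From mathcomp Require Import boolp classical_sets functions cardinality fsbigop.
Set Implicit Arguments.
Unset Strict Implicit.
Unset Printing Implicit Defensive.
Import GRing.Theory.
Local Open Scope classical_set_scope.
Local Open Scope ring_scope.

Section Basic.
Variable Q : zmodType.
Variable H : set Q.
Hypothesis H0 : H 0.
Hypothesis HD : forall a b, H a -> H b -> H (a + b).

Local Notation M := (minv H).
Local Notation V := (vclose H).
Local Notation sm := (@setmul Q).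

Lemma minv_anti X Y : X `<=` Y -> M Y `<=` M X.
Proof. by move=> XY x Hx y /XY; exact: Hx. Qed.

Lemma vclose_ext X : X `<=` V X.
Proof. by move=> x Xx y My; rewrite addrC; apply: My. Qed.

Lemma vclose_mono X Y : X `<=` Y -> V X `<=` V Y.
Proof. by move=> XY; apply: minv_anti; apply: minv_anti. Qed.

Lemma minvV X : M (V X) = M X.
Proof.
apply/seteqP; split; first by apply: minv_anti; apply: vclose_ext.
by move=> x Mx y Vy; rewrite addrC; apply: Vy.
Qed.

Lemma vcloseK X : V (V X) = V X.
Proof. by rewrite /vclose -/(vclose H X) minvV. Qed.

Lemma minvH : M H = H.
Proof.
apply/seteqP; split; first by move=> x /(_ 0 H0); rewrite addr0.
by move=> x Hx y Hy; apply: HD.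
Qed.

Lemma vcloseH : V H = H.
Proof. by rewrite /vclose minvH minvH. Qed.

Lemma vclose_sub X : X `<=` H -> V X `<=` H.
Proof. by move=> XH; rewrite -[X in _ `<=` X]vcloseH; apply: vclose_mono. Qed.

Lemma setmulC X Y : sm X Y = sm Y X.
Proof.
by apply/seteqP; split=> z [a Xa [b Yb <-]]; exists b => //; exists a => //; rewrite addrC.
Qed.

Lemma setmulA X Y Z : sm X (sm Y Z) = sm (sm X Y) Z.
Proof.
apply/seteqP; split=> z.
  move=> [a Xa [_ [b Yb [c Zc <-]] <-]].
  by exists (a + b); [exists a => //; exists b|exists c => //; rewrite addrA].
move=> [_ [a Xa [b Yb <-]] [c Zc <-]].
by exists a => //; exists (b + c); [exists b => //; exists c|rewrite addrA].
Qed.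

Lemma set0mul X : sm [set 0] X = X.
Proof.
apply/seteqP; split=> z; first by move=> [a -> [b Xb <-]]; rewrite add0r.
by move=> Xz; exists 0 => //; exists z => //; rewrite add0r.
Qed.

Lemma setmul_mono X X' Y Y' : X `<=` X' -> Y `<=` Y' -> sm X Y `<=` sm X' Y'.
Proof. by move=> XX YY z [a /XX Xa [b /YY Yb <-]]; exists a => //; exists b. Qed.

Lemma minv_mulV X Y : M (sm X (V Y)) = M (sm X Y).
Proof.
apply/seteqP; split; first by apply: minv_anti; apply: setmul_mono => //; apply: vclose_ext.
move=> x Mx _ [u Xu [z Vz <-]].
rewrite addrA addrC; apply: Vz => y Yy; rewrite -addrA; apply: Mx.
by exists u => //; exists y.
Qed.

Lemma vclose_mulV X Y : V (sm X (V Y)) = V (sm X Y).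
Proof. by rewrite /vclose -/(minv H (sm X (V Y))) minv_mulV. Qed.

Lemma vclose_Vmul X Y : V (sm (V X) Y) = V (sm X Y).
Proof. by rewrite setmulC vclose_mulV setmulC. Qed.

Lemma vmulC A B : vmul H A B = vmul H B A.
Proof. by rewrite /vmul setmulC. Qed.

Lemma vmulA A B C : vmul H A (vmul H B C) = vmul H (vmul H A B) C.
Proof. by rewrite /vmul vclose_mulV vclose_Vmul setmulA. Qed.

Definition hmod (X : set Q) := forall x h, X x -> H h -> X (x + h).

Lemma hmod_mul X : hmod X -> sm X H = X.
Proof.
move=> mX; apply/seteqP; split; first by move=> z [a Xa [b Hb <-]]; apply: mX.
by move=> z Xz; exists z => //; exists 0 => //; rewrite addr0.
Qed.

Lemma hmod_minv X : hmod (M X).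
Proof. by move=> x h Mx Hh y Xy; rewrite addrAC; apply: HD => //; apply: Mx. Qed.

Lemma hmod_V X : hmod (V X).
Proof. exact: hmod_minv. Qed.

Lemma vmulH A : vmul H A H = V A.
Proof.
rewrite /vmul.
apply/seteqP; split; last by apply: vclose_mono => z Az; exists z => //; exists 0 => //; rewrite addr0.
rewrite -[X in _ `<=` X]vcloseK; apply: vclose_mono.
move=> _ [a Aa [h Hh <-]]; apply: hmod_V => //; exact: vclose_ext.
Qed.

Definition shift (x : Q) (X : set Q) : set Q := [set x + y | y in X].

Lemma shift_minv x X : M (shift x X) = shift (- x) (M X).
Proof.
apply/seteqP; split=> z.
  move=> Mz; exists (x + z); last by rewrite addKr.
  by move=> y Xy; rewrite [x + z]addrC -addrA; apply: Mz; exists y.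
move=> [w Mw <-] _ [y Xy <-].
by rewrite [-x + w]addrC -addrA addKr; apply: Mw.
Qed.

Lemma shiftK x X : shift (- x) (shift x X) = X.
Proof.
apply/seteqP; split=> z; first by move=> [_ [y Xy <-] <-]; rewrite addKr.
by move=> Xz; exists (x + z); [exists z | rewrite addKr].
Qed.

Lemma shift_vclose x X : V (shift x X) = shift x (V X).
Proof. by rewrite /vclose shift_minv shift_minv opprK. Qed.

Lemma shift_sub x X Y : X `<=` Y -> shift x X `<=` shift x Y.
Proof. by move=> XY _ [y /XY Yy <-]; exists y. Qed.

Lemma shift_setmul x X Y : shift x (sm X Y) = sm (shift x X) Y.
Proof.
apply/seteqP; split=> z.
  by move=> [_ [a Xa [b Yb <-]] <-]; exists (x + a); [exists a|exists b => //; rewrite addrA].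
by move=> [_ [a Xa <-] [b Yb <-]]; exists (a + b); [exists a => //; exists b|rewrite addrA].
Qed.

Lemma principalE x : principal H x = shift x H.
Proof. by []. Qed.

End Basic.

Section Krull.
Variable Q : zmodType.
Variable H : set Q.
Hypothesis H0 : H 0.
Hypothesis HD : forall a b, H a -> H b -> H (a + b).
Hypothesis cic : completely_integrally_closed H.
Hypothesis acc : v_noetherian H.

Local Notation M := (minv H).
Local Notation V := (vclose H).
Local Notation sm := (@setmul Q).

HB.instance Definition _ := Monoid.isComLaw.Build (set Q) [set 0] (@setmul Q)
  (@setmulA Q) (@setmulC Q) (@set0mul Q).

Definition frac (X : set Q) := X !=set0 /\ M X !=set0.

Lemma VM A : V (M A) = M A.
Proof. by rewrite /vclose -/(vclose H A) minvV. Qed.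

Lemma VHmul B : V (sm H B) = V B.
Proof. by rewrite setmulC; exact: (vmulH H0 HD B). Qed.

Lemma VmulH B : V (sm B H) = V B.
Proof. exact: (vmulH H0 HD B). Qed.

Lemma inv_law A : frac A -> V (sm A (M A)) = H.
Proof.
move=> [[a Aa] [b Mb]].
have sH : sm A (M A) `<=` H by move=> _ [x Ax [y My <-]]; rewrite addrC; apply: My.
suff e : M (sm A (M A)) = H by rewrite /vclose e minvH.
apply/seteqP; split; last first.
  by rewrite -[X in X `<=` _](minvH H0 HD); apply: minv_anti.
move=> x Mx.
have step : forall y, M A y -> M A (x + y).
  move=> y My z Az; rewrite -addrA [y + z]addrC.
  by apply: Mx; exists z => //; exists y.
have nstep : forall n, M A (x *+ n + b).
  by elim=> [|n IH]; rewrite ?mulr0n ?add0r // mulrS -addrA; apply: step.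
apply: (cic (c := a + b)); first by apply: sH; exists a => //; exists b.
move=> n; rewrite -addrA [b + _]addrC addrC; exact: (nstep n a Aa).
Qed.

Lemma vmul_cancel A B C : frac A -> V (sm A B) = V (sm A C) -> V B = V C.
Proof.
move=> fA e.
have E X : V (sm (M A) (V (sm A X))) = V X.
  rewrite (vclose_mulV H) setmulA -(vclose_Vmul H) [sm (M A) A]setmulC.
  by rewrite (inv_law fA) VHmul.
by rewrite -E e E.
Qed.

Lemma inv_unique X Y : frac Y -> V (sm X Y) = H -> V X = M Y.
Proof.
move=> fY e.
have E : V (sm X (V (sm Y (M Y)))) = V X by rewrite (inv_law fY) VmulH.
by rewrite -E (vclose_mulV H) setmulA -(vclose_Vmul H) e VHmul VM.
Qed.

Lemma frac_sub A : A !=set0 -> A `<=` H -> frac A.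
Proof.
move=> nA AH; split=> //; exists 0.
by apply: (minv_anti AH); rewrite (minvH H0 HD).
Qed.

Definition Ssum (l : seq (set Q)) : set Q := \big[sm/[set 0]]_(X <- l) X.
Definition D (l : seq (set Q)) : set Q := V (sm (Ssum l) H).

Lemma Ssum_cons X l : Ssum (X :: l) = sm X (Ssum l).
Proof. by rewrite /Ssum big_cons. Qed.

Lemma Ssum_cat l1 l2 : Ssum (l1 ++ l2) = sm (Ssum l1) (Ssum l2).
Proof. by rewrite /Ssum big_cat. Qed.

Lemma Ssum_perm l1 l2 : perm_eq l1 l2 -> Ssum l1 = Ssum l2.
Proof. by move=> pl; rewrite /Ssum (perm_big _ pl). Qed.

Lemma D_perm l1 l2 : perm_eq l1 l2 -> D l1 = D l2.
Proof. by move=> pl; rewrite /D (Ssum_perm pl). Qed.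

Lemma setmulHH : sm H H = H.
Proof.
by apply: hmod_mul => // x h; apply: HD.
Qed.

Lemma setmulACA a b c d : sm (sm a b) (sm c d) = sm (sm a c) (sm b d).
Proof. by rewrite -!setmulA [sm b (sm c d)]setmulA [sm b c]setmulC -setmulA. Qed.

Lemma D_nil : D [::] = H.
Proof. by rewrite /D /Ssum big_nil set0mul vcloseH. Qed.

Lemma D_cat l1 l2 : D (l1 ++ l2) = V (sm (D l1) (D l2)).
Proof.
rewrite /D (vclose_Vmul H) (vclose_mulV H) setmulACA setmulHH.
by rewrite Ssum_cat.
Qed.

Lemma D_cons X l : D (X :: l) = vmul H X (D l).
Proof.
by rewrite /D /vmul (vclose_mulV H) setmulA Ssum_cons.
Qed.

Lemma D_V l : V (D l) = D l.
Proof. exact: vcloseK. Qed.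

Lemma hmod_D l : hmod H (D l).
Proof. exact: hmod_V. Qed.

Definition allX (l : seq (set Q)) := forall p, p \in l -> XH H p.

Lemma XH_sub p : XH H p -> p `<=` H.
Proof. by case=> _ [[]]. Qed.
Lemma XH_hmod p : XH H p -> hmod H p.
Proof. by case=> _ [[]]. Qed.
Lemma XH_V p : XH H p -> V p = p.
Proof. by case=> _ _ []. Qed.
Lemma XH_ne p : XH H p -> p !=set0.
Proof. by case. Qed.
Lemma XH_neH p : XH H p -> p <> H.
Proof. by case=> _ []. Qed.
Lemma XH_prime p : XH H p -> forall a b, H a -> H b -> p (a + b) -> p a \/ p b.
Proof. by case=> _ []. Qed.

Lemma allX_cons p l : allX (p :: l) <-> XH H p /\ allX l.
Proof.
split; first by move=> h; split=> [|q ql]; apply: h; rewrite inE ?ql ?orbT ?eqxx.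
by case=> hp hl q; rewrite inE => /orP [/eqP ->|/hl].
Qed.

Lemma allX_cat l1 l2 : allX (l1 ++ l2) <-> allX l1 /\ allX l2.
Proof.
split; first by move=> h; split=> q ql; apply: h; rewrite mem_cat ql ?orbT.
by case=> h1 h2 q; rewrite mem_cat => /orP [/h1|/h2].
Qed.

Lemma Ssum_sub l : allX l -> Ssum l `<=` H.
Proof.
elim: l => [|p l IH] hl; first by rewrite /Ssum big_nil => x ->.
case/allX_cons: hl => hp hl; rewrite Ssum_cons => _ [x px [y sy <-]].
by apply: HD; [apply: (XH_sub hp)| apply: IH].
Qed.

Lemma Ssum_ne l : allX l -> Ssum l !=set0.
Proof.
elim: l => [|p l IH] hl; first by exists 0; rewrite /Ssum big_nil.
case/allX_cons: hl => hp hl; rewrite Ssum_cons.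
case: (XH_ne hp) => x px; case: (IH hl) => y sy.
by exists (x + y); exists x => //; exists y.
Qed.

Lemma D_sub l : allX l -> D l `<=` H.
Proof.
move=> hl; apply: vclose_sub => //; rewrite -[X in _ `<=` X]setmulHH.
by apply: setmul_mono => //; apply: Ssum_sub.
Qed.

Lemma D_ne l : allX l -> D l !=set0.
Proof.
move=> hl; case: (Ssum_ne hl) => x sx; exists (x + 0); apply: vclose_ext.
by exists x => //; exists 0.
Qed.

Lemma D_frac l : allX l -> frac (D l).
Proof. by move=> hl; apply: frac_sub; [apply: D_ne|apply: D_sub]. Qed.

Lemma D_single p : XH H p -> D [:: p] = p.
Proof. by move=> hp; rewrite D_cons D_nil vmulH // XH_V. Qed.

Lemma vpow_D p n : vpow H p n = D (nseq n p).
Proof. by elim: n => [|n IH] /=; rewrite ?D_nil // D_cons IH. Qed.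

Lemma D_subp l p : allX l -> p \in l -> D l `<=` p.
Proof.
move=> hl pl; rewrite (D_perm (perm_to_rem pl)) D_cons.
have hp := hl p pl.
rewrite /vmul; apply: (@subset_trans _ (V (sm p H))); last by rewrite VmulH XH_V.
apply: vclose_mono; apply: setmul_mono => //.
apply: D_sub => q qr; apply: hl; exact: (mem_rem qr).
Qed.

End Krull.

Section Krull2.
Variable Q : zmodType.
Variable H : set Q.
Hypothesis H0 : H 0.
Hypothesis HD : forall a b, H a -> H b -> H (a + b).
Hypothesis cic : completely_integrally_closed H.
Hypothesis acc : v_noetherian H.

Local Notation M := (minv H).
Local Notation V := (vclose H).
Local Notation sm := (@setmul Q).
Local Notation D := (D H).
Local Notation allX := (allX H).

Lemma acc_max (P : set Q -> Prop) : (forall B, P B -> divisorial_ideal H B) ->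
  forall B0, P B0 -> exists m, P m /\ forall B, P B -> m `<=` B -> B = m.
Proof.
move=> hP B0 PB0; apply: contrapT => nomax.
have step : forall m, P m -> exists B, P B /\ m `<=` B /\ B <> m.
  move=> m Pm; apply: contrapT => nex; apply: nomax; exists m; split=> // B PB mB.
  by apply: contrapT => neq; apply: nex; exists B.
pose g m := match pselect (exists B, P B /\ m `<=` B /\ B <> m) with
  | left ex => projT1 (cid ex) | right _ => m end.
have gP : forall m, P m -> [/\ P (g m), m `<=` g m & g m <> m].
  move=> m Pm; rewrite /g; case: pselect => [ex|nex]; last by exfalso; apply: nex; apply: step.
  by case: (cid ex) => B [PB [mB nB]].
pose f n := iter n g B0.
have Pf : forall n, P (f n) by elim=> [|n IH] //=; case: (gP _ IH).
have [m0 Hm0] := acc (fun n => hP _ (Pf n)) (fun n => let: And3 _ s _ := gP _ (Pf n) in s).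
by case: (gP _ (Pf m0)) => _ _; apply; exact: (Hm0 m0.+1 (leqnSn m0)).
Qed.

Lemma XH_max p m : XH H p -> m `<=` H -> V m = m -> p `<=` m -> m <> H -> m = p.
Proof.
move=> hp mH Vm pm mneH.
have fm : frac H m.
  by apply: frac_sub => //; case: (XH_ne hp) => x px; exists x; apply: pm.
pose B := V (sm (M m) p).
have BH : B `<=` H.
  by apply: vclose_sub => // _ [x Mx [y py <-]]; apply: Mx; apply: pm.
have eB : V (sm m B) = p.
  rewrite /B (vclose_mulV H) setmulA -(vclose_Vmul H) (inv_law H0 HD cic fm).
  by rewrite VHmul // XH_V.
case: (pselect (m `<=` p)) => [mp|nmp]; first by apply/seteqP; split.
exfalso.
have [u [mu npu]] : exists u, m u /\ ~ p u.
  by move: nmp => /existsNP [u /not_implyP [mu npu]]; exists u.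
have Bp : B `<=` p.
  move=> b Bb; have : p (u + b).
    by rewrite -eB; apply: vclose_ext; exists u => //; exists b.
  by case/(XH_prime hp (mH u mu) (BH b Bb)).
have e2 : V (sm p m) = V (sm p H).
  apply/seteqP; split; first by apply: vclose_mono; apply: setmul_mono.
  rewrite VmulH // (XH_V hp) -[X in X `<=` _]eB; apply: vclose_mono.
  by rewrite setmulC; apply: setmul_mono.
have := vmul_cancel H0 HD cic (frac_sub H0 HD (XH_ne hp) (XH_sub hp)) e2.
by rewrite Vm vcloseH.
Qed.

Lemma exists_prime A : A !=set0 -> A `<=` H -> V A = A -> A <> H ->
  exists p, XH H p /\ A `<=` p.
Proof.
move=> nA AH VA AneH.
pose P B := [/\ divisorial_ideal H B, A `<=` B & B <> H].
have PA : P A.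
  have dA : divisorial_ideal H A.
    split=> //; split=> // x h Ax Hh; rewrite -VA; apply: hmod_V => //.
    by rewrite VA.
  by split.
have [m [[[[mH mmod] Vm] Am mneH] mmax]] := acc_max (fun B (PB : P B) => let: And3 d _ _ := PB in d) PA.
exists m; split=> //; split.
- by case: nA => x Ax; exists x; apply: Am.
- split; [by split|exact: mneH|].
  move=> a b Ha Hb mab; apply: contrapT => /not_orP [nma nmb].
  have big : forall c, H c -> ~ m c -> V (m `|` shift c H) = H.
    move=> c Hc nmc; apply: contrapT => ne.
    have sub : V (m `|` shift c H) `<=` H.
      apply: vclose_sub => // x [/mH //|[h Hh <-]]; exact: HD.
    have mV : m `<=` V (m `|` shift c H).
      by apply: subset_trans (@vclose_ext _ H _); apply: subsetUl.
    have PV : P (V (m `|` shift c H)).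
      split=> //; last by apply: subset_trans mV.
      split; last exact: vcloseK.
      by split=> //; apply: hmod_V.
    have e := mmax _ PV mV.
    apply: nmc; rewrite -e; apply: vclose_ext; right; exists 0 => //.
    by rewrite addr0.
  have eH : V (sm (m `|` shift a H) (m `|` shift b H)) = H.
    rewrite -(vclose_mulV H) -(vclose_Vmul H) (big a Ha nma) (big b Hb nmb).
    by rewrite setmulHH // vcloseH.
  apply: mneH; apply/seteqP; split=> //; rewrite -eH -[X in _ `<=` X]Vm.
  apply: vclose_mono => _ [x [mx|[h Hh <-]] [y [my|[h' Hh' <-]] <-]].
  + by apply: mmod => //; apply: mH.
  + by apply: mmod => //; apply: HD.
  + by rewrite addrC; apply: mmod => //; apply: HD.
  + by rewrite -addrA [h + _]addrCA addrA; apply: mmod => //; apply: HD.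
- by split=> //; split.
Qed.

End Krull2.

Section Krull3.
Variable Q : zmodType.
Variable H : set Q.
Hypothesis H0 : H 0.
Hypothesis HD : forall a b, H a -> H b -> H (a + b).
Hypothesis cic : completely_integrally_closed H.
Hypothesis acc : v_noetherian H.

Local Notation M := (minv H).
Local Notation V := (vclose H).
Local Notation sm := (@setmul Q).
Local Notation D := (D H).
Local Notation allX := (allX H).

Lemma M0 p : p `<=` H -> M p 0.
Proof. by move=> pH; apply: (minv_anti pH); rewrite (minvH H0 HD). Qed.

Lemma factor A : A !=set0 -> A `<=` H -> V A = A -> exists l, allX l /\ A = D l.
Proof.
move=> nA AH VA; apply: contrapT => nfac.
pose P B := [/\ B !=set0, divisorial_ideal H B & ~ exists l, allX l /\ B = D l].
have PA : P A.
  split=> //; split=> //; split=> // x h Ax Hh; rewrite -VA; apply: hmod_V => //.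
  by rewrite VA.
have [m [[nm [[mH mmod] Vm] nfm] mmax]] :=
  acc_max acc (fun B (PB : P B) => let: And3 _ d _ := PB in d) PA.
have mneH : m <> H by move=> e; apply: nfm; exists [::]; rewrite D_nil.
have [p [hp mp]] := exists_prime H0 HD acc nm mH Vm mneH.
have fm : frac H m by apply: frac_sub.
have fp : frac H p by apply: (frac_sub H0 HD); [exact: XH_ne hp|exact: XH_sub hp].
pose m' := V (sm m (M p)).
have m'H : m' `<=` H.
  by apply: vclose_sub => // _ [x mx [y My <-]]; rewrite addrC; apply: My; apply: mp.
have mm' : m `<=` m'.
  move=> x mx; apply: vclose_ext; exists x => //; exists 0; last by rewrite addr0.
  by apply: M0; apply: XH_sub.
have em : V (sm m' p) = m.
  rewrite /m' (vclose_Vmul H) -setmulA -(vclose_mulV H) [sm (M p) p]setmulC.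
  by rewrite (inv_law H0 HD cic fp) VmulH.
have ne : m' <> m.
  move=> e; have e2 : V (sm m p) = V (sm m H) by rewrite VmulH // Vm -{1}e em.
  have := vmul_cancel H0 HD cic fm e2; rewrite vcloseH // XH_V //.
  exact: XH_neH.
have Pm' : ~ P m'.
  move=> Pm'; apply: ne; exact: mmax _ Pm' mm'.
have [l [hl el]] : exists l, allX l /\ m' = D l.
  apply: contrapT => nf; apply: Pm'; split=> //.
    by case: nm => x mx; exists x; apply: mm'.
  by split; [split=> //; apply: hmod_V|apply: vcloseK].
apply: nfm; exists (p :: l); split; first by apply/allX_cons.
by rewrite D_cons /vmul -el setmulC em.
Qed.

Lemma not_p0 p : XH H p -> ~ p 0.
Proof.
move=> hp p0; apply: (XH_neH hp); apply/seteqP; split; first exact: XH_sub.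
by move=> h Hh; rewrite -[h]add0r; apply: (XH_hmod hp).
Qed.

Lemma avoid l p : allX l -> XH H p -> (forall q, q \in l -> ~ q `<=` p) ->
  exists y, [/\ Ssum l y, H y & ~ p y].
Proof.
move=> hl hp; elim: l hl => [|q l IH] hl nex.
  by exists 0; split; [rewrite /Ssum big_nil|exact: H0|exact: not_p0].
case/allX_cons: hl => hq hl.
have [x [qx npx]] : exists x, q x /\ ~ p x.
  have : ~ q `<=` p by apply: nex; rewrite inE eqxx.
  by move=> /existsNP [x /not_implyP [qx npx]]; exists x.
have [|y [sy Hy npy]] := IH hl.
  by move=> r rl; apply: nex; rewrite inE rl orbT.
exists (x + y); split.
- by rewrite Ssum_cons; exists x => //; exists y.
- by apply: HD => //; apply: (XH_sub hq).
- by case/(XH_prime hp (XH_sub hq qx) Hy).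
Qed.

Lemma D_in_prime l p : allX l -> XH H p -> D l `<=` p -> exists2 q, q \in l & q `<=` p.
Proof.
move=> hl hp Dp; apply: contrapT => nex.
have [y [sy Hy npy]] := avoid hl hp (fun q ql qp => nex (ex_intro2 _ _ q ql qp)).
apply: npy; rewrite -[y]addr0; apply: Dp; apply: vclose_ext.
by exists y => //; exists 0.
Qed.

Lemma D_inj l l' : allX l -> allX l' -> D l = D l' -> perm_eq l l'.
Proof.
elim: l l' => [|p l IH] l' hl hl' e.
  case: l' e hl' => [//|q r] e hl'.
  have hq := hl' q (mem_head _ _).
  exfalso; apply: (XH_neH hq); apply/seteqP; split; first exact: XH_sub.
  by rewrite -{1}(D_nil H0 HD) e; apply: (D_subp H0 HD) => //; rewrite inE eqxx.
case/allX_cons: (hl) => hp hl1.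
have : D l' `<=` p by rewrite -e; apply: D_subp => //; rewrite inE eqxx.
case/(D_in_prime hl' hp) => q ql' qp.
have hq := hl' q ql'.
have epq : p = q.
  exact: (XH_max H0 HD cic hq (XH_sub hp) (XH_V hp) qp (XH_neH hp)).
subst q.
have hr : allX (rem p l') by move=> r /mem_rem; apply: hl'.
have e2 : D l = D (rem p l').
  rewrite -(D_V H l) -(D_V H (rem p l')); apply: (vmul_cancel H0 HD cic (A := p)).
    by apply: (frac_sub H0 HD); [exact: XH_ne hp|exact: XH_sub hp].
  by have := e; rewrite (D_perm H (perm_to_rem ql')) !D_cons.
apply: (@perm_trans _ (p :: rem p l')); first by rewrite perm_cons; apply: IH.
by rewrite perm_sym perm_to_rem.
Qed.

End Krull3.

Section Bridge.
Variable Q : zmodType.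
Variable H : set Q.
Hypothesis H0 : H 0.
Hypothesis HD : forall a b, H a -> H b -> H (a + b).
Hypothesis cic : completely_integrally_closed H.
Hypothesis acc : v_noetherian H.

Local Notation M := (minv H).
Local Notation V := (vclose H).
Local Notation sm := (@setmul Q).
Local Notation D := (D H).
Local Notation allX := (allX H).
Local Notation vpow_D := (vpow_D H0 HD).
Local Notation D_nil := (D_nil H0 HD).
Local Notation D_cat := (D_cat H0 HD).
Local Notation D_subp := (D_subp H0 HD).
Local Notation D_inj := (D_inj H0 HD cic).
Local Notation D_sub := (D_sub H0 HD).
Local Notation VHmul := (VHmul H0 HD).
Local Notation VmulH := (VmulH H0 HD).
Local Notation vcloseH := (vcloseH H0 HD).

Lemma big_vmul_D (s : seq (set Q)) (g : set Q -> seq (set Q)) :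
  \big[vmul H/H]_(q <- s) D (g q) = D (flatten (map g s)).
Proof.
elim: s => [|q s IH]; first by rewrite big_nil D_nil.
by rewrite big_cons IH /= D_cat.
Qed.

Definition Lof (s : seq (set Q)) (e : set Q -> nat) :=
  flatten [seq nseq (e q) q | q <- s].

Lemma count_Lof s e p : uniq s -> count_mem p (Lof s e) = if p \in s then e p else 0%N.
Proof.
elim: s => [|q s IH] //= /andP [qs us].
rewrite count_cat IH // count_nseq.
case: (eqVneq p q) => [->|npq] /=.
  by rewrite (negbTE qs) mem_head eqxx /= addn0 mul1n.
rewrite inE eq_sym (negbTE npq) /=.
by case: (p \in s).
Qed.

Lemma allX_Lof s e : (forall q, q \in s -> e q <> 0%N -> XH H q) -> allX (Lof s e).
Proof.
move=> hs q /flattenP [_ /mapP [r rs ->]] /nseqP [-> n0].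
by apply: hs => //; case: (e r) n0.
Qed.

Lemma vpow_neH p n : XH H p -> n <> 0%N -> vpow H p n <> H.
Proof.
move=> hp n0 e; apply: (XH_neH hp); apply/seteqP; split; first exact: XH_sub.
rewrite -e vpow_D => t Dt; apply: (D_subp _ _ Dt).
  by move=> q /nseqP [->].
by case: n n0 {e Dt} => // n _; rewrite inE eqxx.
Qed.

Lemma fs_vprod (T : set (set Q)) (e : set Q -> nat) : finite_set T -> T `<=` XH H ->
  let s := finite_support H T (fun q => vpow H q (e q)) in
  [/\ vprod H T e = D (Lof s e), uniq s & forall q : set Q, q \in s <-> T q /\ e q <> 0%N].
Proof.
move=> fT TX s.
have mems : forall q : set Q, q \in s <-> T q /\ e q <> 0%N.
  move=> q; rewrite /s in_finite_support; last by apply: finite_setIl.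
  rewrite in_setE /= /preimage /=; split=> [[Tq nH]|[Tq e0]]; split=> //.
    by move=> e0; apply: nH; rewrite e0.
  exact: vpow_neH (TX q Tq) e0.
split=> //; last exact: finite_support_uniq.
rewrite /vprod -/s (eq_bigr (fun q => D (nseq (e q) q))); last by move=> q _; rewrite vpow_D.
by rewrite big_vmul_D.
Qed.

End Bridge.

Section Elem.
Variable Q : zmodType.
Variable H : set Q.
Hypothesis H0 : H 0.
Hypothesis HD : forall a b, H a -> H b -> H (a + b).
Hypothesis cic : completely_integrally_closed H.
Hypothesis acc : v_noetherian H.

Local Notation M := (minv H).
Local Notation V := (vclose H).
Local Notation sm := (@setmul Q).
Local Notation D := (D H).
Local Notation allX := (allX H).
Local Notation vpow_D := (vpow_D H0 HD).
Local Notation D_nil := (D_nil H0 HD).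
Local Notation D_cat := (D_cat H0 HD).
Local Notation D_subp := (D_subp H0 HD).
Local Notation D_inj := (D_inj H0 HD cic).
Local Notation D_sub := (D_sub H0 HD).
Local Notation VHmul := (VHmul H0 HD).
Local Notation VmulH := (VmulH H0 HD).
Local Notation vcloseH := (vcloseH H0 HD).

Definition restr (T : set (set Q)) (e : set Q -> nat) (p : set Q) : nat :=
  if `[< T p >] then e p else 0%N.

Lemma perm_count (l1 l2 : seq (set Q)) :
  (forall p, count_mem p l1 = count_mem p l2) -> perm_eq l1 l2.
Proof. by move=> h; apply/allP => x _; rewrite /= h. Qed.

Lemma count_gt0 (p : set Q) l : (0 < count_mem p l)%N = (p \in l).
Proof. by rewrite -has_count has_pred1. Qed.

Lemma fs_vprod_count (T : set (set Q)) (e : set Q -> nat) : finite_set T -> T `<=` XH H ->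
  let s := finite_support H T (fun q => vpow H q (e q)) in
  [/\ vprod H T e = D (Lof s e), allX (Lof s e) &
      forall p, count_mem p (Lof s e) = restr T e p].
Proof.
move=> fT TX s; have [eD us mems] := fs_vprod H0 HD e fT TX.
split=> //.
  by apply: allX_Lof => q /mems [Tq _] _; apply: TX.
move=> p; rewrite count_Lof // /restr.
case: (boolP (p \in s)) => [/mems [Tp _]|nps]; first by rewrite asboolT.
case: (asboolP (T p)) => // Tp.
by case: (e p =P 0%N) => // ne; case/negP: nps; apply/mems.
Qed.

Lemma vexpD l p n : allX l -> (vexp H (D l) p n <-> n = count_mem p l).
Proof.
move=> hl; split.
  move=> [e [sX fin eD ep]].
  have [eD' hL cL] := fs_vprod_count e fin sX.
  have pl : perm_eq l (Lof (finite_support H [set q | e q <> 0%N]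
                           (fun q => vpow H q (e q))) e).
    by apply: D_inj => //; rewrite -eD'.
  rewrite (permP pl) cL /restr -ep.
  by case: (asboolP (e p <> 0%N)) => // /contrapT ->.
move=> ->; pose e := fun q => count_mem q l; exists e.
have sX : [set q | e q <> 0%N] `<=` XH H.
  by move=> q /= /eqP; rewrite -lt0n count_gt0 => /hl.
have fin : finite_set [set q | e q <> 0%N].
  apply: (sub_finite_set _ (finite_seq l)) => q /= /eqP.
  by rewrite -lt0n count_gt0.
split=> //.
have [eD' hL cL] := fs_vprod_count e fin sX.
rewrite eD'; apply: D_perm; apply: perm_count => q.
rewrite cL /restr; case: (asboolP (e q <> 0%N)) => // /contrapT.
by rewrite /e => ->.
Qed.

Lemma suppD l : allX l -> supp H (D l) = [set p | p \in l].
Proof.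
move=> hl; apply/seteqP; split=> p.
  move=> [Xp [n [n0 /(vexpD _ _ hl) en]]]; rewrite /= -count_gt0 -en //.
move=> /= pl; split; first exact: hl.
by exists (count_mem p l); split; [rewrite count_gt0|apply/(vexpD _ _ hl)].
Qed.

Lemma shift_shift (x y : Q) (X : set Q) : shift x (shift y X) = shift (x + y) X.
Proof.
apply/seteqP; split=> z.
  by move=> [_ [w Xw <-] <-]; exists w => //; rewrite addrA.
by move=> [w Xw <-]; exists (y + w); [exists w|rewrite addrA].
Qed.

Lemma sm_shift (x y : Q) (A B : set Q) : sm (shift x A) (shift y B) = shift (x + y) (sm A B).
Proof.
rewrite -shift_setmul setmulC -shift_setmul setmulC shift_shift addrC.
by [].
Qed.

Lemma shift0 (X : set Q) : shift 0 X = X.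
Proof.
by apply/seteqP; split=> z; [move=> [w Xw <-]; rewrite add0r|exists z => //; rewrite add0r].
Qed.

Lemma principal_props x : H x ->
  [/\ shift x H !=set0, shift x H `<=` H & V (shift x H) = shift x H].
Proof.
move=> Hx; split.
- by exists (x + 0); exists 0.
- by move=> _ [h Hh <-]; apply: HD.
- by rewrite shift_vclose vcloseH.
Qed.

Definition fact (x : Q) : seq (set Q) :=
  match pselect (exists l, allX l /\ shift x H = D l) with
  | left ex => projT1 (cid ex)
  | right _ => [::]
  end.

Lemma fact_spec x : H x -> allX (fact x) /\ shift x H = D (fact x).
Proof.
move=> Hx; rewrite /fact; case: pselect => [ex|nex].
  by case: (cid ex).
have [n s v] := principal_props Hx.
by exfalso; apply: nex; apply: (factor H0 HD cic acc n s v).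
Qed.

Lemma fact_allX x : H x -> allX (fact x).
Proof. by case/fact_spec. Qed.

Lemma fact_D x : H x -> D (fact x) = shift x H.
Proof. by case/fact_spec. Qed.

Lemma fact_add x y : H x -> H y -> perm_eq (fact (x + y)) (fact x ++ fact y).
Proof.
move=> Hx Hy; apply: D_inj.
- by apply: fact_allX; apply: HD.
- by apply/allX_cat; split; apply: fact_allX.
rewrite D_cat !fact_D //; last by apply: HD.
by rewrite sm_shift (setmulHH H0 HD) shift_vclose vcloseH.
Qed.

Lemma fact_perm_D x l : H x -> allX l -> D l = shift x H -> perm_eq (fact x) l.
Proof. by move=> Hx hl e; apply: D_inj => //; [apply: fact_allX|rewrite e fact_D]. Qed.

Lemma unitP x : H x -> munit H x <-> fact x = [::].
Proof.
move=> Hx; split.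
  move=> [_ Hnx].
  have e : shift x H = H.
    apply/seteqP; split; first by case: (principal_props Hx).
    by move=> h Hh; exists (- x + h); [apply: HD|rewrite addNKr].
  have := fact_perm_D Hx (l := [::]) (fun _ => ltac:(done)); rewrite D_nil e => /(_ erefl).
  by move/perm_nilP.
move=> f0; split=> //.
have : shift x H 0 by rewrite -fact_D // f0 D_nil.
by move=> [h Hh /eqP]; rewrite addr_eq0 => /eqP ->; rewrite opprK.
Qed.

Lemma divP x y r : H x -> H y -> allX r -> perm_eq (fact y) (fact x ++ r) ->
  exists w, [/\ H w, y = x + w & perm_eq (fact w) r].
Proof.
move=> Hx Hy hr pe.
have e : shift y H = shift x (D r).
  rewrite -fact_D // (D_perm H pe) D_cat fact_D // -shift_setmul shift_vclose.
  by rewrite setmulC VmulH D_V.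
have : shift y H y by exists 0 => //; rewrite addr0.
rewrite e => -[w Dw ew]; exists w.
have Hw : H w by apply: (D_sub hr).
split=> //.
apply: fact_perm_D => //.
by rewrite -[D r](shiftK x) -e -ew shift_shift addKr.
Qed.

Lemma assocP x y : H x -> H y -> massoc H x y <-> perm_eq (fact x) (fact y).
Proof.
move=> Hx Hy; split.
  move=> [_ [_ [Hxy Hyx]]].
  apply: fact_perm_D => //; first exact: fact_allX.
  rewrite fact_D //; apply/seteqP; split=> _ [h Hh <-].
    by exists (- (x - y) + h); [apply: HD|rewrite opprB addrA [x + _]addrC subrK].
  by exists (x - y + h); [apply: HD|rewrite addrA [y + _]addrC subrK].
move=> pe.
have e : shift x H = shift y H by rewrite -!fact_D // (D_perm H pe).
have : shift y H x by rewrite -e; exists 0 => //; rewrite addr0.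
move=> [h Hh ex].
have : shift x H y by rewrite e; exists 0 => //; rewrite addr0.
move=> [h' Hh' ey].
split=> //; split=> //; split.
  by rewrite -ex addrC addKr.
by rewrite opprB -ey addrC addKr.
Qed.

End Elem.

Section Zprod.
Variable Q : zmodType.
Variable H : set Q.
Hypothesis H0 : H 0.
Hypothesis HD : forall a b, H a -> H b -> H (a + b).
Hypothesis cic : completely_integrally_closed H.
Hypothesis acc : v_noetherian H.

Local Notation M := (minv H).
Local Notation V := (vclose H).
Local Notation sm := (@setmul Q).
Local Notation D := (D H).
Local Notation allX := (allX H).
Local Notation vpow_D := (vpow_D H0 HD).
Local Notation D_nil := (D_nil H0 HD).
Local Notation D_cat := (D_cat H0 HD).
Local Notation D_subp := (D_subp H0 HD).
Local Notation D_inj := (D_inj H0 HD cic).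
Local Notation D_sub := (D_sub H0 HD).
Local Notation D_frac := (D_frac H0 HD).
Local Notation VHmul := (VHmul H0 HD).
Local Notation VmulH := (VmulH H0 HD).
Local Notation vcloseH := (vcloseH H0 HD).
Local Notation minvH := (minvH H0 HD).
Local Notation inv_law := (inv_law H0 HD cic).
Local Notation inv_unique := (inv_unique H0 HD cic).

Lemma inv_mul A B : frac H A -> frac H B -> V (sm (M A) (M B)) = M (V (sm A B)).
Proof.
move=> fA fB; apply: inv_unique.
  split; first by case: fA => [[a Aa] _]; case: fB => [[b Bb] _]; exists (a + b);
    apply: vclose_ext; exists a => //; exists b.
  rewrite minvV; case: fA => [_ [a Aa]]; case: fB => [_ [b Bb]]; exists (a + b).
  move=> _ [x Ax [y By <-]]; rewrite addrACA.
  by apply: HD; [exact: Aa _ Ax|exact: Bb _ By].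
rewrite (vclose_mulV H) setmulACA -(vclose_Vmul H) -(vclose_mulV H).
by rewrite [sm (M A) A]setmulC [sm (M B) B]setmulC !inv_law // setmulHH // vcloseH.
Qed.

Lemma vpow_M p k : XH H p -> vpow H (M p) k = M (D (nseq k p)).
Proof.
move=> hp; elim: k => [|k IH] /=; first by rewrite D_nil minvH.
rewrite IH /vmul inv_mul; first by rewrite -/(vmul H p _) -D_cons.
  by apply: (frac_sub H0 HD); [exact: XH_ne hp|exact: XH_sub hp].
by apply: D_frac => q /nseqP [->].
Qed.

Definition zpos (z : int) : nat := if z is Posz n then n else 0%N.
Definition zneg (z : int) : nat := if z is Negz n then n.+1 else 0%N.

Lemma vpowz_D p z : XH H p ->
  vpowz H p z = V (sm (D (nseq (zpos z) p)) (M (D (nseq (zneg z) p)))).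
Proof.
move=> hp; case: z => n /=.
  by rewrite D_nil minvH VmulH vpow_D D_V.
by rewrite D_nil VHmul -/(vpow H (M p) n.+1) vpow_M // VM.
Qed.

Lemma MH_VH X : M X = H -> V X = H.
Proof. by move=> e; rewrite /vclose e minvH. Qed.

Lemma vpowz_neH p z : XH H p -> z <> 0 -> vpowz H p z <> H.
Proof.
move=> hp z0; case: z z0 => n z0 /=.
  by apply: vpow_neH => // n0; apply: z0; rewrite n0.
rewrite -/(vpow H (M p) n.+1) vpow_M // => /MH_VH.
by rewrite D_V -vpow_D; apply: vpow_neH.
Qed.

Lemma big_vmul_DM (s : seq (set Q)) (P N : set Q -> seq (set Q)) :
  (forall q, q \in s -> allX (P q) /\ allX (N q)) ->
  \big[vmul H/H]_(q <- s) V (sm (D (P q)) (M (D (N q)))) =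
  V (sm (D (flatten (map P s))) (M (D (flatten (map N s))))).
Proof.
elim: s => [|q s IH] hs.
  by rewrite big_nil /= D_nil minvH setmulHH // vcloseH.
have [hPq hNq] := hs q (mem_head _ _).
have hs' : forall r, r \in s -> allX (P r) /\ allX (N r).
  by move=> r rs; apply: hs; rewrite inE rs orbT.
have hPs : allX (flatten (map P s)).
  by move=> r /flattenP [_ /mapP [t ts ->]]; case: (hs' t ts) => h _; apply: h.
have hNs : allX (flatten (map N s)).
  by move=> r /flattenP [_ /mapP [t ts ->]]; case: (hs' t ts) => _ h; apply: h.
rewrite big_cons IH // /= /vmul (vclose_Vmul H) (vclose_mulV H) setmulACA.
rewrite -(vclose_Vmul H) -(vclose_mulV H) inv_mul; try exact: D_frac.
by rewrite -!D_cat.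
Qed.

Lemma fs_vprodz (T : set (set Q)) (a : set Q -> int) : finite_set T -> T `<=` XH H ->
  let s := finite_support H T (fun q => vpowz H q (a q)) in
  [/\ vprodz H T a = V (sm (D (Lof s (zpos \o a))) (M (D (Lof s (zneg \o a))))),
      allX (Lof s (zpos \o a)), allX (Lof s (zneg \o a)),
      forall p, count_mem p (Lof s (zpos \o a)) = restr T (zpos \o a) p &
      forall p, count_mem p (Lof s (zneg \o a)) = restr T (zneg \o a) p].
Proof.
move=> fT TX s.
have mems : forall q : set Q, q \in s <-> T q /\ a q <> 0.
  move=> q; rewrite /s in_finite_support; last by apply: finite_setIl.
  rewrite in_setE /= /preimage /=; split=> [[Tq nH]|[Tq e0]]; split=> //.
    by move=> e0; apply: nH; rewrite e0.
  exact: vpowz_neH (TX q Tq) e0.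
have us : uniq s by exact: finite_support_uniq.
have cnt : forall f : int -> nat, f 0 = 0%N ->
    forall p, count_mem p (Lof s (f \o a)) = restr T (f \o a) p.
  move=> f f0 p; rewrite count_Lof // /restr.
  case: (boolP (p \in s)) => [/mems [Tp _]|nps]; first by rewrite asboolT.
  case: (asboolP (T p)) => // Tp /=.
  by case: (a p =P 0) => [->|ne] //; case/negP: nps; apply/mems.
have hX : forall f : int -> nat, f 0 = 0%N -> allX (Lof s (f \o a)).
  move=> f f0; apply: allX_Lof => q /mems [Tq _] _; exact: TX.
split; [|exact: hX|exact: hX|exact: cnt|exact: cnt].
rewrite /vprodz -/s (@eq_big_seq _ _ _ _ s _
  (fun q => V (sm (D (nseq (zpos (a q)) q)) (M (D (nseq (zneg (a q)) q)))))); last first.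
  by move=> q /mems [Tq _]; rewrite vpowz_D //; apply: TX.
rewrite big_vmul_DM //.
move=> q /mems [Tq _]; split=> r /nseqP [-> _]; exact: TX.
Qed.

End Zprod.

Section RelS.
Variable Q : zmodType.
Variable H : set Q.
Hypothesis H0 : H 0.
Hypothesis HD : forall a b, H a -> H b -> H (a + b).
Hypothesis cic : completely_integrally_closed H.
Hypothesis acc : v_noetherian H.

Local Notation M := (minv H).
Local Notation V := (vclose H).
Local Notation sm := (@setmul Q).
Local Notation D := (D H).
Local Notation allX := (allX H).
Local Notation D_nil := (D_nil H0 HD).
Local Notation D_cat := (D_cat H0 HD).
Local Notation D_inj := (D_inj H0 HD cic).
Local Notation D_sub := (D_sub H0 HD).
Local Notation D_frac := (D_frac H0 HD).
Local Notation VHmul := (VHmul H0 HD).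
Local Notation VmulH := (VmulH H0 HD).
Local Notation vcloseH := (vcloseH H0 HD).
Local Notation minvH := (minvH H0 HD).
Local Notation inv_law := (inv_law H0 HD cic).
Local Notation fact := (fact H).

Definition Rel (l l' : seq (set Q)) := exists x : Q, D l = shift x (D l').

Lemma Rel_refl l : Rel l l.
Proof. by exists 0; rewrite shift0. Qed.

Lemma Rel_sym l l' : Rel l l' -> Rel l' l.
Proof. by move=> [x e]; exists (- x); rewrite e shift_shift addNr shift0. Qed.

Lemma Rel_trans l1 l2 l3 : Rel l1 l2 -> Rel l2 l3 -> Rel l1 l3.
Proof. by move=> [x e1] [y e2]; exists (x + y); rewrite e1 e2 shift_shift. Qed.

Lemma Rel_perm l1 l1' l2 l2' : perm_eq l1 l1' -> perm_eq l2 l2' -> Rel l1 l2 -> Rel l1' l2'.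
Proof. by move=> p1 p2 [x e]; exists x; rewrite -(D_perm H p1) -(D_perm H p2). Qed.

Lemma Rel_add l1 l2 m1 m2 : Rel l1 l2 -> Rel m1 m2 -> Rel (l1 ++ m1) (l2 ++ m2).
Proof.
move=> [x e1] [y e2]; exists (x + y).
by rewrite !D_cat e1 e2 sm_shift shift_vclose.
Qed.

Lemma Rel_cancel l1 l2 m : allX m -> Rel (l1 ++ m) (l2 ++ m) -> Rel l1 l2.
Proof.
move=> hm [x e]; exists x.
have E : V (sm (D m) (D l1)) = V (sm (D m) (shift x (D l2))).
  rewrite setmulC -D_cat e D_cat -shift_vclose shift_setmul.
  by rewrite [in RHS]setmulC.
have := vmul_cancel H0 HD cic (D_frac hm) E.
by rewrite D_V shift_vclose D_V.
Qed.

Lemma Rel_nil l : allX l -> (Rel l [::] <-> exists a, H a /\ perm_eq (fact a) l).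
Proof.
move=> hl; split.
  move=> [x e]; rewrite D_nil in e.
  have Hx : H x by apply: (D_sub hl); rewrite e; exists 0 => //; rewrite addr0.
  by exists x; split=> //; apply: fact_perm_D.
move=> [a [Ha pa]]; exists a.
by rewrite -(D_perm H pa) fact_D // D_nil.
Qed.

Lemma cz_vprod T (al : set Q -> nat) L : finite_set T -> T `<=` XH H -> allX L ->
  (forall p, count_mem p L = restr T al p) ->
  (class_zero H (vprod H T al) <-> Rel L [::]).
Proof.
move=> fT TX hL cL.
have [eD hL' cL'] := fs_vprod_count H0 HD al fT TX.
have pe : perm_eq L (Lof (finite_support H T (fun q => vpow H q (al q))) al).
  by apply: perm_count => p; rewrite cL cL'.
rewrite eD -(D_perm H pe) /class_zero; split; move=> [x e]; exists x.
  by rewrite e D_nil.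
by rewrite e D_nil.
Qed.

Lemma cz_vprodz T (al : set Q -> int) P N : finite_set T -> T `<=` XH H ->
  allX P -> allX N ->
  (forall p, count_mem p P = restr T (zpos \o al) p) ->
  (forall p, count_mem p N = restr T (zneg \o al) p) ->
  (class_zero H (vprodz H T al) <-> Rel P N).
Proof.
move=> fT TX hP hN cP cN.
have [eD hP' hN' cP' cN'] := fs_vprodz H0 HD cic al fT TX.
set P' := Lof _ _ in eD hP' cP'.
set N' := Lof _ _ in eD hN' cN'.
have pP : perm_eq P P' by apply: perm_count => p; rewrite cP cP'.
have pN : perm_eq N N' by apply: perm_count => p; rewrite cN cN'.
rewrite eD -(D_perm H pP) -(D_perm H pN) /class_zero; split.
  move=> [x e]; exists x.
  have E1 : D P = V (sm (V (sm (D P) (M (D N)))) (D N)).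
    rewrite (vclose_Vmul H) -setmulA [sm (M (D N)) (D N)]setmulC -(vclose_mulV H).
    by rewrite inv_law ?VmulH ?D_V //; exact: D_frac hN.
  by rewrite E1 e -shift_setmul shift_vclose VHmul D_V.
move=> [x e]; exists x.
rewrite e -shift_setmul shift_vclose inv_law ?vcloseH //.
exact: D_frac.
Qed.

End RelS.

Section Vec.
Variable Q : zmodType.
Variable H : set Q.
Hypothesis H0 : H 0.
Hypothesis HD : forall a b, H a -> H b -> H (a + b).
Hypothesis cic : completely_integrally_closed H.
Hypothesis acc : v_noetherian H.
Variable S : set (set Q).
Hypothesis fS : finite_set S.
Hypothesis SX : S `<=` XH H.
Variable sS : seq (set Q).
Hypothesis usS : uniq sS.
Hypothesis msS : forall p : set Q, p \in sS <-> S p.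

Local Notation D := (D H).
Local Notation allX := (allX H).
Local Notation fact := (fact H).
Local Notation Rel := (Rel H).

Definition LS (c : set Q -> nat) := Lof sS c.
Definition vadd (c d : set Q -> nat) := fun p => (c p + d p)%N.
Definition vscale (k : nat) (c : set Q -> nat) := fun p => (k * c p)%N.
Definition z0 : set Q -> nat := fun _ => 0%N.
Definition VR c d := Rel (LS c) (LS d).
Definition cnt (a : Q) := fun p => count_mem p (fact a).
Definition inS (a : Q) := forall p, p \in fact a -> S p.

Lemma cLS c p : count_mem p (LS c) = restr S c p.
Proof.
rewrite /LS count_Lof // /restr.
case: (boolP (p \in sS)) => [/msS Sp|nps]; first by rewrite asboolT.
by case: (asboolP (S p)) => // /msS Sp; rewrite Sp in nps.
Qed.

Lemma hLS c : allX (LS c).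
Proof. by apply: allX_Lof => q /msS Sq _; apply: SX. Qed.

Lemma LS0 : LS z0 = [::].
Proof. by rewrite /LS /Lof; elim: sS. Qed.

Lemma LS_add c d : perm_eq (LS (vadd c d)) (LS c ++ LS d).
Proof.
apply: perm_count => p; rewrite count_cat !cLS /restr /vadd.
by case: asboolP.
Qed.

Lemma LS_eqS c d : (forall p, S p -> c p = d p) -> perm_eq (LS c) (LS d).
Proof.
move=> h; apply: perm_count => p; rewrite !cLS /restr.
by case: asboolP => // /h.
Qed.

Lemma VR_refl c : VR c c.
Proof. exact: Rel_refl. Qed.

Lemma VR_sym c d : VR c d -> VR d c.
Proof. exact: Rel_sym. Qed.

Lemma VR_trans c d e : VR c d -> VR d e -> VR c e.
Proof. exact: Rel_trans. Qed.

Lemma VR_eqS c c' d d' : (forall p, S p -> c p = c' p) -> (forall p, S p -> d p = d' p) ->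
  VR c d -> VR c' d'.
Proof. by move=> hc hd; apply: Rel_perm; apply: LS_eqS. Qed.

Lemma VR_add c d c' d' : VR c d -> VR c' d' -> VR (vadd c c') (vadd d d').
Proof.
move=> h h'; apply: (Rel_perm _ _ (Rel_add H0 HD h h')); rewrite perm_sym; exact: LS_add.
Qed.

Lemma VR_cancel c d e : VR (vadd c e) (vadd d e) -> VR c d.
Proof.
move=> h; apply: (Rel_cancel H0 HD cic (m := LS e)); first exact: hLS.
by apply: (Rel_perm _ _ h); exact: LS_add.
Qed.

Lemma VR_scale k c d : VR c d -> VR (vscale k c) (vscale k d).
Proof.
move=> h; elim: k => [|k IH].
  by apply: (VR_eqS _ _ (VR_refl z0)) => p _; rewrite /vscale mul0n.
apply: (VR_eqS (c := vadd c (vscale k c)) (d := vadd d (vscale k d))).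
- by move=> p _; rewrite /vadd /vscale mulSn.
- by move=> p _; rewrite /vadd /vscale mulSn.
exact: VR_add.
Qed.

Lemma VR0P c : VR c z0 <-> exists a, H a /\ perm_eq (fact a) (LS c).
Proof. by rewrite /VR LS0; apply: (Rel_nil H0 HD cic acc); apply: hLS. Qed.

Lemma fact_LS a : H a -> inS a -> perm_eq (fact a) (LS (cnt a)).
Proof.
move=> Ha ia; apply: perm_count => p; rewrite cLS /restr /cnt.
case: asboolP => // nSp; apply/count_memPn; apply/negP => /ia.
exact: nSp.
Qed.

Lemma VR_elem a : H a -> inS a -> VR (cnt a) z0.
Proof. by move=> Ha ia; apply/VR0P; exists a; split=> //; apply: fact_LS. Qed.

Lemma NdepP T : T `<=` S -> (classes_N_dependent H T <->
  exists al : set Q -> nat, (exists p, T p /\ al p <> 0%N) /\ VR (restr T al) z0).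
Proof.
move=> TS.
have fT : finite_set T by apply: sub_finite_set fS.
have TX : T `<=` XH H by apply: subset_trans SX.
have key : forall al, class_zero H (vprod H T al) <-> VR (restr T al) z0.
  move=> al; rewrite /VR LS0; apply: (cz_vprod H0 HD fT TX); first exact: hLS.
  move=> p; rewrite cLS /restr; case: asboolP => // Sp.
  by case: asboolP => // /TS.
split; move=> [al [ex cz]]; exists al; split=> //; exact/key.
Qed.

Lemma neg_sub (m n : nat) : (m < n)%N -> m%:Z - n%:Z = Negz (n - m).-1.
Proof.
move=> h; rewrite NegzE prednK ?subn_gt0 // -subzn ?(ltnW h) //.
by rewrite opprB.
Qed.

Lemma zpos_sub (m n : nat) : zpos (m%:Z - n%:Z) = (m - n)%N.
Proof.
case: (leqP n m) => h; first by rewrite subzn.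
by rewrite neg_sub //=; apply/esym/eqP; rewrite subn_eq0 ltnW.
Qed.

Lemma zneg_sub (m n : nat) : zneg (m%:Z - n%:Z) = (n - m)%N.
Proof.
case: (leqP n m) => h; first by rewrite subzn //=; apply/esym/eqP; rewrite subn_eq0.
by rewrite neg_sub //= prednK // subn_gt0.
Qed.

Lemma ZindP T : T `<=` S -> (classes_Z_independent H T <->
  forall c d, VR (restr T c) (restr T d) -> forall p, T p -> c p = d p).
Proof.
move=> TS.
have fT : finite_set T by apply: sub_finite_set fS.
have TX : T `<=` XH H by apply: subset_trans SX.
have key : forall al : set Q -> int, class_zero H (vprodz H T al) <->
    VR (restr T (zpos \o al)) (restr T (zneg \o al)).
  move=> al; rewrite /VR; apply: (cz_vprodz H0 HD cic fT TX); try exact: hLS.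
    move=> p; rewrite cLS /restr; case: asboolP => // Sp.
    by case: asboolP => // /TS.
  move=> p; rewrite cLS /restr; case: asboolP => // Sp.
  by case: asboolP => // /TS.
split.
  move=> zi c d h p Tp.
  pose al := fun q => (c q)%:Z - (d q)%:Z.
  have h2 : VR (restr T (zpos \o al)) (restr T (zneg \o al)).
    apply: (VR_cancel (e := restr T (fun q => minn (c q) (d q)))).
    apply: (VR_eqS _ _ h) => q _; rewrite /vadd /restr /al /=;
      case: asboolP => // _; rewrite ?zpos_sub ?zneg_sub.
      by rewrite minnE subnKC // leq_subr.
    by rewrite minnC minnE subnKC // leq_subr.
  have := zi al (proj2 (key al) h2) p Tp; rewrite /al => /eqP.
  by rewrite subr_eq0 => /eqP [].
move=> h al /key cz p Tp.
have := h _ _ cz p Tp; rewrite /=.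
by case: (al p) => [[|n]|n].
Qed.

End Vec.

Section Elem2.
Variable Q : zmodType.
Variable H : set Q.
Hypothesis H0 : H 0.
Hypothesis HD : forall a b, H a -> H b -> H (a + b).
Hypothesis cic : completely_integrally_closed H.
Hypothesis acc : v_noetherian H.

Local Notation fact := (fact H).
Local Notation fact_add := (fact_add H0 HD cic acc).
Local Notation unitP := (unitP H0 HD cic acc).

Lemma fact0 : fact 0 = [::].
Proof. by apply/(unitP H0); split=> //; rewrite oppr0. Qed.

Lemma sumH (l : seq Q) : (forall u, u \in l -> H u) -> H (\sum_(u <- l) u).
Proof.
elim: l => [|u l IH] hl; first by rewrite big_nil.
rewrite big_cons; apply: HD; first by apply: hl; rewrite inE eqxx.
by apply: IH => v vl; apply: hl; rewrite inE vl orbT.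
Qed.

Lemma fact_sum (l : seq Q) : (forall u, u \in l -> H u) ->
  perm_eq (fact (\sum_(u <- l) u)) (flatten (map fact l)).
Proof.
elim: l => [|u l IH] hl; first by rewrite big_nil fact0.
have Hu : H u by apply: hl; rewrite inE eqxx.
have hl' : forall v, v \in l -> H v by move=> v vl; apply: hl; rewrite inE vl orbT.
rewrite big_cons /=; apply: perm_trans (fact_add Hu (sumH hl')) _.
by rewrite perm_cat2l; apply: IH.
Qed.

Lemma count_fact_sum (l : seq Q) p : (forall u, u \in l -> H u) ->
  count_mem p (fact (\sum_(u <- l) u)) = sumn (map (fun u => count_mem p (fact u)) l).
Proof.
move=> hl; rewrite (permP (fact_sum hl)) count_flatten -map_comp.
by [].
Qed.

Lemma count_fact_mulrn a n p : H a -> count_mem p (fact (a *+ n)) = (n * count_mem p (fact a))%N.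
Proof.
move=> Ha; elim: n => [|n IH]; first by rewrite mulr0n fact0.
have Han : H (a *+ n).
  by elim: n {IH} => [|n IH]; rewrite ?mulr0n // mulrS; apply: HD.
by rewrite mulrS (permP (fact_add Ha Han)) count_cat IH mulSn.
Qed.

Lemma mem_fact_sum (l : seq Q) u p : (forall v, v \in l -> H v) -> u \in l ->
  p \in fact u -> p \in fact (\sum_(v <- l) v).
Proof.
move=> hl ul pu; rewrite (perm_mem (fact_sum hl)).
by apply/flattenP; exists (fact u) => //; apply: map_f.
Qed.

Lemma atoms b : H b -> ~ munit H b ->
  exists l : seq Q, [/\ l <> [::], forall u, u \in l -> mirreducible H u &
                        b = \sum_(u <- l) u].
Proof.
move=> Hb; move: {2}(size (fact b)) (leqnn (size (fact b))) => n.
elim: n b Hb => [|n IH] b Hb sb nub.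
  by exfalso; apply: nub; apply/(unitP Hb); apply/nilP; rewrite /nilp -leqn0.
case: (pselect (mirreducible H b)) => [ib|nib].
  by exists [:: b]; split=> //; [move=> u; rewrite inE => /eqP ->|rewrite big_seq1].
have [x [y [Hx Hy exy [nux nuy]]]] : exists x y, [/\ H x, H y, b = x + y & ~ munit H x /\ ~ munit H y].
  apply: contrapT => nex; apply: nib; split=> // x y Hx Hy e.
  apply: contrapT => /not_orP [nux nuy]; apply: nex; exists x, y; split=> //.
have pe := fact_add Hx Hy; rewrite -exy in pe.
have sx : (size (fact x) <= n)%N.
  rewrite -ltnS; apply: leq_trans sb; rewrite (perm_size pe) size_cat -addn1 leq_add2l.
  by rewrite lt0n size_eq0; apply/eqP => /(unitP Hy).
have sy : (size (fact y) <= n)%N.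
  rewrite -ltnS; apply: leq_trans sb; rewrite (perm_size pe) size_cat -add1n leq_add2r.
  by rewrite lt0n size_eq0; apply/eqP => /(unitP Hx).
have [lx [nx ax ex]] := IH x Hx sx nux.
have [ly [ny ay ey]] := IH y Hy sy nuy.
exists (lx ++ ly); split.
- by case: lx nx {ax ex}.
- by move=> u; rewrite mem_cat => /orP [/ax|/ay].
- by rewrite big_cat -ex -ey.
Qed.

Lemma submset (l1 l2 : seq (set Q)) : (forall p, count_mem p l1 <= count_mem p l2)%N ->
  exists r, perm_eq l2 (l1 ++ r) /\ (forall p, p \in r -> p \in l2).
Proof.
elim: l1 l2 => [|x l1 IH] l2 h; first by exists l2; split=> //.
have xl2 : x \in l2.
  by rewrite -count_gt0; apply: leq_trans (h x); rewrite /= eqxx.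
have [r [pr mr]] : exists r, perm_eq (rem x l2) (l1 ++ r) /\ (forall p, p \in r -> p \in rem x l2).
  apply: IH => p; rewrite count_mem_rem.
  have := h p; rewrite /= eq_sym; case: (p == x) => /=; last by rewrite subn0.
  by rewrite add1n subn1 => hp; rewrite -ltnS prednK //; apply: leq_trans hp.
exists r; split.
  by apply: perm_trans (perm_to_rem xl2) _; rewrite /= perm_cons.
by move=> p /mr /mem_rem.
Qed.

Lemma irr_div u a w : mirreducible H u -> H a -> ~ munit H a -> H w -> u = a + w -> munit H w.
Proof. by move=> [Hu _ iu] Ha nua Hw e; case: (iu a w Ha Hw e). Qed.

End Elem2.

Section Main.
Variable Q : zmodType.
Variable H : set Q.
Hypothesis H0 : H 0.
Hypothesis HD : forall a b, H a -> H b -> H (a + b).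
Hypothesis cic : completely_integrally_closed H.
Hypothesis acc : v_noetherian H.
Variable S : set (set Q).
Hypothesis fS : finite_set S.
Hypothesis SX : S `<=` XH H.
Hypothesis nS : S !=set0.
Variable sS : seq (set Q).
Hypothesis usS : uniq sS.
Hypothesis msS : forall p : set Q, p \in sS <-> S p.

Local Notation fact := (fact H).
Local Notation fact_add := (fact_add H0 HD cic acc).
Local Notation fact_D := (fact_D H0 HD cic acc).
Local Notation fact_allX := (fact_allX H0 HD cic acc).
Local Notation unitP := (unitP H0 HD cic acc).
Local Notation assocP := (assocP H0 HD cic acc).
Local Notation divP := (divP H0 HD cic acc).
Local Notation atoms := (atoms H0 HD cic acc).
Local Notation fact_sum := (fact_sum H0 HD cic acc).
Local Notation mem_fact_sum := (mem_fact_sum H0 HD cic acc).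
Local Notation count_fact_mulrn := (count_fact_mulrn H0 HD cic acc).
Local Notation sumH := (sumH H0 HD).
Local Notation VR := (VR H sS).
Local Notation cnt := (cnt H).
Local Notation inS := (inS H S).
Local Notation LS := (LS sS).
Local Notation z0 := (@z0 Q).
Local Notation vadd := (@vadd Q).
Local Notation vscale := (@vscale Q).
Local Notation NdepP := (NdepP H0 HD fS SX usS msS).
Local Notation ZindP := (ZindP H0 HD cic fS SX usS msS).
Local Notation VR0P := (VR0P H0 HD cic acc SX msS).
Local Notation VR_elem := (VR_elem H0 HD cic acc SX usS msS).
Local Notation VR_eqS := (VR_eqS (H := H) usS msS).
Local Notation VR_add := (VR_add H0 HD usS msS).
Local Notation VR_cancel := (VR_cancel H0 HD cic SX usS msS).
Local Notation VR_scale := (VR_scale H0 HD usS msS).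
Local Notation cLS := (cLS usS msS).

Lemma supp_fact a : H a -> supp H (principal H a) = [set p | p \in fact a].
Proof.
move=> Ha; rewrite /principal -/(shift a H) -fact_D //.
by apply: (suppD H0 HD cic); apply: fact_allX.
Qed.

Lemma irr_H u : mirreducible H u -> H u. Proof. by case. Qed.
Lemma irr_nu u : mirreducible H u -> ~ munit H u. Proof. by case. Qed.

Lemma nu_fact a : H a -> ~ munit H a -> exists p, p \in fact a.
Proof.
move=> Ha nua; case e: (fact a) => [|p l]; first by case: nua; apply/unitP.
by exists p; rewrite mem_head.
Qed.

Lemma memfact_assoc (l : seq Q) a : l <> [::] ->
  (forall u, u \in l -> H u /\ perm_eq (fact u) (fact a)) ->
  forall p, p \in fact (\sum_(u <- l) u) = (p \in fact a).
Proof.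
move=> nl hl p.
have hH : forall u, u \in l -> H u by move=> u /hl [].
rewrite (perm_mem (fact_sum hH)); apply/flattenP/idP.
  by move=> [_ /mapP [u ul ->]]; rewrite (perm_mem (proj2 (hl u ul))).
case: l nl hl hH => [//|u l] _ hl hH pa.
exists (fact u); first by apply: map_f; rewrite mem_head.
by rewrite (perm_mem (proj2 (hl u (mem_head _ _)))).
Qed.

Lemma i12 : (exists a, abs_irreducible H a /\ supp H (principal H a) = S) ->
  minimal_in (supps_nonunits H) S.
Proof.
move=> [a [[ia ai] sa]]; have Ha := irr_H ia; have nua := irr_nu ia.
split; first by exists a.
move=> T [b [Hb nub sb]] TS.
pose n := size (fact b).
have cb : forall p, (count_mem p (fact b) <= count_mem p (fact (a *+ n)))%N.
  move=> p; rewrite count_fact_mulrn //.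
  case: (boolP (p \in fact b)) => pb; last by move/count_memPn: pb => ->.
  have pa : p \in fact a.
    have : supp H (principal H a) p by rewrite sa; apply: TS; rewrite -sb supp_fact.
    by rewrite supp_fact.
  apply: leq_trans (count_size _ _) _; rewrite -/n leq_pmulr //.
  by rewrite count_gt0.
have [r [pr mr]] := submset cb.
have Han : H (a *+ n) by elim: (n) => [|k IH]; rewrite ?mulr0n // mulrS; apply: HD.
have hr : allX H r by move=> p /mr; apply: fact_allX.
have [w [Hw ew pw]] := divP Hb Han hr pr.
have key : exists l : seq Q, [/\ l <> [::], forall u, u \in l -> H u /\ perm_eq (fact u) (fact a)
    & perm_eq (fact b) (fact (\sum_(u <- l) u))].
  case: (pselect (munit H w)) => [uw|nuw].
    have nubw : ~ munit H (b + w).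
      move/(unitP (HD Hb Hw)) => e; apply: nub; apply/(unitP Hb).
      by have := perm_size (fact_add Hb Hw); rewrite e size_cat => /esym/eqP;
         rewrite addn_eq0 size_eq0 => /andP [/eqP].
    have [l [nl al el]] := atoms (HD Hb Hw) nubw.
    have [_ hl] := ai n l al (etrans (esym el) (esym ew)).
    exists l; split=> //.
      move=> u ul; have Hu := irr_H (al u ul); split=> //.
      by apply/(assocP Hu Ha); apply: hl.
    rewrite -el perm_sym; apply: perm_trans (fact_add Hb Hw) _.
    by move/(unitP Hw): uw => ->; rewrite cats0.
  have [l1 [nl1 al1 el1]] := atoms Hb nub.
  have [l2 [nl2 al2 el2]] := atoms Hw nuw.
  have al : forall u, u \in l1 ++ l2 -> mirreducible H u.
    by move=> u; rewrite mem_cat => /orP [/al1|/al2].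
  have es : \sum_(u <- l1 ++ l2) u = a *+ n by rewrite big_cat -el1 -el2 ew.
  have [_ hl] := ai n (l1 ++ l2) al es.
  exists l1; split=> //; last by rewrite -el1.
  move=> u ul; have Hu := irr_H (al1 u ul); split=> //.
  by apply/(assocP Hu Ha); apply: hl; rewrite mem_cat ul.
have [l [nl hl pb]] := key.
rewrite -sb -sa !supp_fact //; apply/seteqP; split=> p /=.
  by rewrite (perm_mem pb) (memfact_assoc nl hl).
by rewrite (perm_mem pb) (memfact_assoc nl hl).
Qed.

Lemma i23 : minimal_in (supps_nonunits H) S -> minimal_in (supps_irreducibles H) S.
Proof.
move=> [[b [Hb nub sb]] mn].
have [[|u l] [nl al el]] := atoms Hb nub; first by [].
have iu := al u (mem_head _ _); have Hu := irr_H iu.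
have hH : forall v, v \in u :: l -> H v by move=> v /al /irr_H.
split.
  exists u; split=> //; apply: mn; first by exists u; split=> //; apply: irr_nu.
  move=> p; rewrite -sb !supp_fact // el => /= pu.
  exact: mem_fact_sum hH (mem_head _ _) pu.
move=> T [w [iw sw]] TS; apply: mn => //.
by exists w; split=> //; [apply: irr_H|apply: irr_nu].
Qed.

Lemma inS_supp a : H a -> supp H (principal H a) `<=` S -> inS a.
Proof. by move=> Ha sa p pa; apply: sa; rewrite supp_fact. Qed.

Lemma i34 : minimal_in (supps_irreducibles H) S ->
  classes_N_dependent H S /\ (forall T, T `<=` S -> T <> S -> classes_N_independent H T).
Proof.
move=> [[u [iu su]] mi]; have Hu := irr_H iu.
have iS : inS u by apply: (inS_supp Hu); rewrite su.
split.
  apply/NdepP => //; exists (cnt u); split.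
    case: nS => p Sp; exists p; split=> //.
    have : supp H (principal H u) p by rewrite su.
    rewrite supp_fact // /= /cnt -count_gt0 => h.
    by apply/eqP; rewrite -lt0n.
  apply: (VR_eqS _ _ (VR_elem Hu iS)) => // p Sp.
  by rewrite /restr asboolT.
move=> T TS TnS /(NdepP TS) [al [[p0 [Tp0 al0]] /VR0P [a [Ha pa]]]].
have ca : forall p, count_mem p (fact a) = restr S (restr T al) p.
  by move=> p; rewrite (permP pa) cLS.
have nua : ~ munit H a.
  move/(unitP Ha) => e; have := ca p0; rewrite e /restr /= asboolT ?asboolT //.
    by move=> h; apply: al0; rewrite -h.
  exact: TS.
have [[|w l] [nl al' el]] := atoms Ha nua; first by [].
have iw := al' w (mem_head _ _); have Hw := irr_H iw.
have hH : forall v, v \in w :: l -> H v by move=> v /al' /irr_H.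
have wT : supp H (principal H w) `<=` T.
  move=> p; rewrite supp_fact // => /= pw.
  have : p \in fact a by rewrite el; exact: mem_fact_sum hH (mem_head _ _) pw.
  rewrite -count_gt0 ca /restr; case: asboolP => // _.
  by case: asboolP.
apply: TnS; apply/seteqP; split=> //.
have e : supp H (principal H w) = S.
  by apply: mi (subset_trans wT TS); exists w.
by rewrite -e.
Qed.

Lemma list_min (s : seq (set Q)) (P : pred (set Q)) (f g : set Q -> nat) :
  (forall r, P r -> 0 < g r)%N -> has P s ->
  exists q, [/\ q \in s, P q & forall r, r \in s -> P r -> (f q * g r <= f r * g q)%N].
Proof.
elim: s => [|x s IH] // gpos hs.
case: (boolP (has P s)) => [hPs|nhPs].
  have [q [qs Pq mq]] := IH gpos hPs.
  case: (boolP (P x && (f x * g q < f q * g x)%N)) => [/andP [Px lt]|nb].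
    exists x; split=> //; first by rewrite mem_head.
    move=> r; rewrite inE => /orP [/eqP ->|rs] Pr; first by [].
    have gq := gpos q Pq.
    rewrite -(leq_pmul2r gq).
    apply: (@leq_trans (f q * g x * g r)%N).
      by rewrite mulnAC leq_mul2r (ltnW lt) orbT.
    by rewrite mulnAC [(f r * g x * g q)%N]mulnAC leq_mul2r (mq r rs Pr) orbT.
  exists q; split=> //; first by rewrite inE qs orbT.
  move=> r; rewrite inE => /orP [/eqP ->|rs] Pr; last exact: mq.
  by move: nb; rewrite Pr /= -leqNgt.
have Px : P x by move: hs => /= /orP [//|h]; rewrite h in nhPs.
exists x; split=> //; first by rewrite mem_head.
move=> r; rewrite inE => /orP [/eqP ->//|rs] Pr.
by case/hasP: nhPs; exists r.
Qed.

Definition Zhyp := forall T, T `<=` S -> T <> S -> classes_Z_independent H T.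

Lemma Sminus q : S q -> (S `\` [set q]) `<=` S /\ (S `\` [set q]) <> S.
Proof.
move=> Sq; split; first by move=> x [].
move=> e; have : (S `\` [set q]) q by rewrite e.
by case=> _; apply.
Qed.

Lemma notSminus q x : S x -> ~ (S `\` [set q]) x -> x = q.
Proof. by move=> Sx nT; apply: contrapT => nxq; apply: nT. Qed.

Lemma pos_lemma (Zh : Zhyp) c : VR c z0 -> (exists p, S p /\ c p <> 0%N) ->
  forall p, S p -> (0 < c p)%N.
Proof.
move=> h [p1 [Sp1 c1]] r Sr; rewrite lt0n; apply/eqP => cr.
have [T'S T'n] := Sminus Sr.
have zi := proj1 (ZindP T'S) (Zh _ T'S T'n).
apply: (c1); apply: (zi c z0).
  apply: (VR_eqS _ _ h) => x Sx; rewrite /restr; case: asboolP => // nT.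
  by rewrite (notSminus Sx nT).
by split=> // e; apply: c1; rewrite e.
Qed.

Lemma propor (Zh : Zhyp) q c d : S q -> VR c z0 -> VR d z0 ->
  forall p, S p -> (d q * c p = c q * d p)%N.
Proof.
move=> Sq hc hd.
pose X := vscale (d q) c; pose Y := vscale (c q) d.
have hX : VR X z0.
  by apply: (VR_eqS _ _ (VR_scale (d q) hc)) => // r _; rewrite /vscale /z0 muln0.
have hY : VR Y z0.
  by apply: (VR_eqS _ _ (VR_scale (c q) hd)) => // r _; rewrite /vscale /z0 muln0.
have hXY : VR X Y by apply: VR_trans hX (VR_sym hY).
have [T'S T'n] := Sminus Sq.
pose T' := S `\` [set q].
pose del := fun p => if `[< p = q >] then X p else 0%N.
have h2 : VR (vadd (restr T' X) del) (vadd (restr T' Y) del).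
  apply: (VR_eqS _ _ hXY) => x Sx; rewrite /vadd /restr /del.
    case: asboolP => [[_ nxq]|nT].
      by case: asboolP => [e|_]; [case: (nxq e)|rewrite addn0].
    by rewrite asboolT ?(notSminus Sx nT).
  case: asboolP => [[_ nxq]|nT].
    by case: asboolP => [e|_]; [case: (nxq e)|rewrite addn0].
  rewrite asboolT ?(notSminus Sx nT) // /X /Y /vscale.
  by rewrite add0n mulnC.
have zi := proj1 (ZindP T'S) (Zh _ T'S T'n) _ _ (VR_cancel h2).
move=> p Sp; case: (pselect (p = q)) => [->|npq]; first by rewrite mulnC.
by have := zi p (conj Sp npq).
Qed.

Lemma i45 : classes_N_dependent H S /\ (forall T, T `<=` S -> T <> S -> classes_N_independent H T) ->
  classes_N_dependent H S /\ Zhyp.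
Proof.
move=> [nd ni]; split=> // T TS TnS.
have [al [[p1 [Sp1 a1]] hA]] := proj1 (NdepP (@subset_refl _ S)) nd.
pose A := restr S al.
have A1 : A p1 <> 0%N by rewrite /A /restr asboolT.
have Apos : forall r, S r -> (0 < A r)%N.
  move=> r Sr; rewrite lt0n; apply/eqP => Ar.
  have [T'S T'n] := Sminus Sr.
  apply: (ni _ T'S T'n); apply/(NdepP T'S); exists A; split.
    exists p1; split=> //; split=> // e; apply: A1; rewrite e.
    by [].
  apply: (VR_eqS _ _ hA) => // x Sx; rewrite {1}/restr asboolT //.
  rewrite {1}/restr; case: asboolP => [_|nT]; first by rewrite /A /restr asboolT.
  by rewrite (notSminus Sx nT); move: Ar; rewrite /A /restr asboolT.
have core : forall C Dd, VR C Dd -> (forall r, ~ T r -> C r = 0%N /\ Dd r = 0%N) ->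
    forall p0, S p0 -> (Dd p0 < C p0)%N -> False.
  move=> C Dd hCD van p0 Sp0 lt0.
  have [q [qs Pq mq]] := list_min (P := [pred r | Dd r < C r]%N) A
      (g := fun r => C r - Dd r)%N (fun r Pr => ltac:(by rewrite subn_gt0))
      (introT hasP (ex_intro2 _ _ p0 (proj2 (msS p0) Sp0) lt0)).
  have Sq : S q by apply/msS.
  pose b := (C q - Dd q)%N.
  have bpos : (0 < b)%N by rewrite subn_gt0.
  have nt : forall r, S r -> (A q * C r <= b * A r + A q * Dd r)%N.
    move=> r Sr; case: (ltnP (Dd r) (C r)) => Pr.
      have := mq r (proj2 (msS r) Sr) Pr => /= h.
      by rewrite addnC -leq_subLR -mulnBr [(b * _)%N]mulnC.
    by apply: leq_trans (leq_addl _ _); rewrite leq_mul2l Pr orbT.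
  pose g := fun r => (b * A r + A q * Dd r - A q * C r)%N.
  have eqS1 : forall r, S r -> vadd (vscale b A) (vscale (A q) Dd) r = vadd g (vscale (A q) C) r.
    by move=> r Sr; rewrite /vadd /vscale /g subnK //; exact: nt.
  have hg : VR g z0.
    apply: (VR_cancel (e := vscale (A q) C)).
    have h1 : VR (vadd (vscale b A) (vscale (A q) Dd)) (vadd z0 (vscale (A q) C)).
      apply: VR_add.
        by apply: (VR_eqS _ _ (VR_scale b hA)) => // r _; rewrite /vscale /z0 muln0.
      exact: VR_sym (VR_scale (A q) hCD).
    by apply: (VR_eqS _ _ h1) => r Sr //; rewrite eqS1.
  have gq : g q = 0%N.
    rewrite /g /b mulnC -mulnDr subnK ?subnn //; exact: ltnW.
  have [r [Sr nTr]] : exists r, S r /\ ~ T r.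
    apply: contrapT => nex; apply: TnS; apply/seteqP; split=> // x Sx.
    by apply: contrapT => nTx; apply: nex; exists x.
  have gr : g r = (b * A r)%N.
    by rewrite /g; case: (van r nTr) => -> ->; rewrite !muln0 addn0 subn0.
  have gpos : (0 < g r)%N by rewrite gr muln_gt0 bpos Apos.
  have [T'S T'n] := Sminus Sq.
  apply: (ni _ T'S T'n); apply/(NdepP T'S); exists g; split.
    exists r; split; last by rewrite gr; apply/eqP; rewrite -lt0n -gr.
    by split=> // erq; move: gpos; rewrite erq gq.
  apply: (VR_eqS _ _ hg) => // x Sx; rewrite /restr; case: asboolP => // nT.
  by rewrite (notSminus Sx nT).
apply/(ZindP TS) => c d h p Tp; apply: contrapT => ne.
have van : forall C, forall r, ~ T r -> restr T C r = 0%N.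
  by move=> C r nTr; rewrite /restr; case: asboolP.
case: (ltngtP (restr T d p) (restr T c p)) => [lt|lt|eq].
- by apply: (core _ _ h _ p (TS p Tp) lt) => r nTr; rewrite !van.
- by apply: (core _ _ (VR_sym h) _ p (TS p Tp) lt) => r nTr; rewrite !van.
- by apply: ne; move: eq; rewrite /restr asboolT.
Qed.

Lemma dom_assoc a x : H a -> ~ munit H a -> mirreducible H x -> inS a ->
  (forall p, S p -> (cnt a p <= cnt x p)%N) -> perm_eq (fact x) (fact a).
Proof.
move=> Ha nua ix iSa dom; have Hx := irr_H ix.
have cb : forall p, (count_mem p (fact a) <= count_mem p (fact x))%N.
  move=> p; case: (pselect (S p)) => [Sp|nSp]; first exact: dom.
  suff -> : count_mem p (fact a) = 0%N by [].
  by apply/count_memPn; apply/negP => /iSa.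
have [r [pr mr]] := submset cb.
have hr : allX H r by move=> p /mr; apply: fact_allX.
have [w [Hw ex pw]] := divP Ha Hx hr pr.
have uw := irr_div ix Ha nua Hw ex.
move/(unitP Hw): uw => fw; rewrite fw in pw.
have r0 : r = [::] by apply/eqP; rewrite -size_eq0 -(perm_size pw).
by rewrite r0 cats0 in pr.
Qed.

Lemma sumn_const (l : seq Q) (f : Q -> nat) k : (forall u, u \in l -> f u = k) ->
  sumn (map f l) = (size l * k)%N.
Proof.
elim: l => [|u l IH] //= h; rewrite h ?mem_head // IH ?mulSn //.
by move=> v vl; apply: h; rewrite inE vl orbT.
Qed.

Lemma i51 : classes_N_dependent H S /\ Zhyp ->
  exists a, abs_irreducible H a /\ supp H (principal H a) = S.
Proof.
move=> [nd Zh].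
have [al [[p1 [Sp1 a1]] hA]] := proj1 (NdepP (@subset_refl _ S)) nd.
have [q0 Sq0] := nS.
pose Pm := fun m => `[< exists c, [/\ VR c z0, (exists p, S p /\ c p <> 0%N) & c q0 = m] >].
have exP : exists m, Pm m.
  exists (restr S al q0); apply/asboolP; exists (restr S al); split=> //.
  by exists p1; split=> //; rewrite /restr asboolT.
case: (ex_minnP exP) => m0 /asboolP [g [hg nzg gq0]] minm.
have gpos := pos_lemma Zh hg nzg.
have m0pos : (0 < m0)%N by rewrite -gq0; apply: gpos.
have [a [Ha pa]] := proj1 (VR0P g) hg.
have ca : forall p, count_mem p (fact a) = restr S g p by move=> p; rewrite (permP pa) cLS.
have iSa : inS a.
  move=> p; rewrite -count_gt0 ca /restr; case: asboolP => //.
have caS : forall p, S p -> cnt a p = g p by move=> p Sp; rewrite /cnt ca /restr asboolT.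
have caq : cnt a q0 = m0 by rewrite caS.
have nua : ~ munit H a.
  move/(unitP Ha) => e; move: caq; rewrite /cnt e /= => e0.
  by move: m0pos; rewrite -e0.
have key : forall x, H x -> ~ munit H x -> inS x -> (m0 <= cnt x q0)%N.
  move=> x Hx nux ix; apply: minm; apply/asboolP; exists (cnt x); split=> //.
    exact: VR_elem.
  have [p px] := nu_fact Hx nux; exists p; split; first exact: ix.
  by apply/eqP; rewrite -lt0n count_gt0.
have ia : mirreducible H a.
  split=> // x y Hx Hy exy; apply: contrapT => /not_orP [nux nuy].
  have pe := fact_add Hx Hy; rewrite -exy in pe.
  have ix : inS x by move=> p px; apply: iSa; rewrite (perm_mem pe) mem_cat px.
  have iy : inS y by move=> p py; apply: iSa; rewrite (perm_mem pe) mem_cat py orbT.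
  have := permP pe (pred1 q0); rewrite count_cat -/(cnt a q0) caq => e.
  have := leq_add (key x Hx nux ix) (key y Hy nuy iy).
  rewrite /cnt -e -{3}(addn0 m0) leq_add2l leqn0 => /eqP m00.
  by move: m0pos; rewrite m00.
exists a; split; last first.
  rewrite supp_fact //; apply/seteqP; split=> p /=; first exact: iSa.
  by move=> Sp; rewrite -count_gt0 ca /restr asboolT // gpos.
split=> // n l al' hsum.
have hl : forall u, u \in l -> H u by move=> u /al' /irr_H.
have iSu : forall u, u \in l -> inS u.
  move=> u ul p pu; apply: iSa.
  have := mem_fact_sum hl ul pu; rewrite hsum -count_gt0 count_fact_mulrn //.
  by rewrite muln_gt0 count_gt0 => /andP [].
have eq_u : forall u, u \in l -> forall p, S p -> cnt u p = cnt a p.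
  move=> u ul; have iu := al' u ul; have Hu := irr_H iu; have nuu := irr_nu iu.
  have ku := key u Hu nuu (iSu u ul).
  have pr := propor Zh Sq0 (VR_elem Ha iSa) (VR_elem Hu (iSu u ul)).
  case: (ltnP (cnt a q0) (cnt u q0)) => lt.
    exfalso.
    have dom : forall p, S p -> (cnt a p <= cnt u p)%N.
      move=> p Sp; rewrite -(@leq_pmul2l (cnt a q0)); last by rewrite caq.
      rewrite -pr //; apply: leq_mul => //; exact: ltnW.
    have := dom_assoc Ha nua iu iSa dom => /permP /(_ (pred1 q0)).
    by rewrite -/(cnt u q0) -/(cnt a q0) => e; move: lt; rewrite e ltnn.
  have equ : cnt u q0 = cnt a q0 by apply/eqP; rewrite eqn_leq lt caq.
  move=> p Sp; have := pr p Sp; rewrite equ => /eqP.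
  by rewrite eqn_pmul2l ?caq // => /eqP.
have pu : forall u, u \in l -> perm_eq (fact u) (fact a).
  move=> u ul; apply: perm_count => p.
  case: (pselect (S p)) => [Sp|nSp]; first exact: eq_u.
  have z1 : count_mem p (fact u) = 0%N by apply/count_memPn; apply/negP => /(iSu u ul).
  have z2 : count_mem p (fact a) = 0%N by apply/count_memPn; apply/negP => /iSa.
  by rewrite z1 z2.
split.
  have := count_fact_sum H0 HD cic acc q0 hl.
  rewrite hsum count_fact_mulrn // -/(cnt a q0) caq.
  rewrite (sumn_const (k := m0)); last first.
    by move=> u ul; rewrite -caq; apply: eq_u.
  by move/eqP; rewrite eqn_pmul2r // => /eqP.
by move=> u ul; apply/(assocP (hl u ul) Ha); apply: pu.
Qed.

Lemma uniq_ai (Zh : Zhyp) a b : abs_irreducible H a -> abs_irreducible H b ->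
  supp H (principal H a) = S -> supp H (principal H b) = S -> massoc H a b.
Proof.
move=> [ia _] [ib _] sa sb.
have Ha := irr_H ia; have Hb := irr_H ib; have nua := irr_nu ia; have nub := irr_nu ib.
have iSa : inS a by apply: (inS_supp Ha); rewrite sa.
have iSb : inS b by apply: (inS_supp Hb); rewrite sb.
have [q0 Sq0] := nS.
have posx : forall x, H x -> supp H (principal H x) = S -> (0 < cnt x q0)%N.
  move=> x Hx sx; rewrite /cnt count_gt0.
  have : supp H (principal H x) q0 by rewrite sx.
  by rewrite supp_fact.
have pa := posx a Ha sa; have pb := posx b Hb sb.
have pr := propor Zh Sq0 (VR_elem Ha iSa) (VR_elem Hb iSb).
case: (leqP (cnt a q0) (cnt b q0)) => le.
  have dom : forall p, S p -> (cnt a p <= cnt b p)%N.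
    move=> p Sp; rewrite -(@leq_pmul2l (cnt b q0)) // pr //.
    exact: leq_mul.
  have := dom_assoc Ha nua ib iSa dom.
  by rewrite perm_sym => /(assocP Ha Hb).
have dom : forall p, S p -> (cnt b p <= cnt a p)%N.
  move=> p Sp; rewrite -(@leq_pmul2l (cnt a q0)) // -pr //.
  by apply: leq_mul => //; exact: ltnW.
have := dom_assoc Hb nub ia iSb dom.
by move/(assocP Ha Hb).
Qed.

End Main.

Theorem mainTheorem11 (Q : zmodType) (H : set Q) (S : set (set Q)) :
  krull_monoid H ->
  S !=set0 -> finite_set S -> S `<=` XH H ->
  [<-> (exists a, abs_irreducible H a /\ supp H (principal H a) = S);
       minimal_in (supps_nonunits H) S;
       minimal_in (supps_irreducibles H) S;
       classes_N_dependent H S /\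
         (forall T, T `<=` S -> T <> S -> classes_N_independent H T);
       classes_N_dependent H S /\
         (forall T, T `<=` S -> T <> S -> classes_Z_independent H T)]
  /\
  (forall a b, abs_irreducible H a -> abs_irreducible H b ->
     supp H (principal H a) = S -> supp H (principal H b) = S ->
     massoc H a b).
Proof.
move=> [[H0 HD _] acc cic] nS fS SX.
have [s0 eS] := proj1 (finite_seqP _) fS.
pose sS := undup s0.
have usS : uniq sS := undup_uniq s0.
have msS : forall p : set Q, p \in sS <-> S p.
  by move=> p; rewrite eS /= mem_undup.
split.
  tfae.
  - exact: (i12 H0 HD cic acc).
  - exact: (i23 H0 HD cic acc).
  - exact: (i34 H0 HD cic acc fS SX nS usS msS).
  - exact: (i45 H0 HD cic fS SX usS msS).
  - exact: (i51 H0 HD cic acc fS SX nS usS msS).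
move=> a b ia ib sa sb.
have h4 := i34 H0 HD cic acc fS SX nS usS msS
  (i23 H0 HD cic acc (i12 H0 HD cic acc (ex_intro _ a (conj ia sa)))).
have [_ Zh] := i45 H0 HD cic fS SX usS msS h4.
exact: (uniq_ai H0 HD cic acc fS SX nS usS msS Zh ia ib sa sb).
Qed.
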